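(* For every positive integer $n$, $\mathrm{Sort}_n(\mathrm{SC}_{\underline{23}1})=\mathrm{Av}_n(1324,\mu_{2413})$, the set of permutations in $\mathfrak S_n$ that avoid the classical pattern $1324$ and the mesh pattern $\mu_{2413}=(2413,\{(1,0),(2,1),(2,2)\})$.
   Context: $\mathfrak S_n$ is the set of permutations of $\{1,\dots,n\}$. A vincular pattern is a permutation with some entries underlined; a sequence contains it if it has a subsequence with the same relative order in which entries corresponding to adjacent underlined entries occupy consecutive positions. An occurrence of $\underline{23}1$ is $a_j a_{j+1} a_l$ with $l>j+1$ and $a_l<a_j<a_{j+1}$. A mesh pattern is a pair $(\sigma,A)$ with $\sigma\in\mathfrak S_k$ and $A\subseteq\{0,\dots,k\}^2$. A permutation $\tau\in\mathfrak S_n$ contains $(\sigma,A)$ if there are positions $i_1<\dots<i_k$ with $\tau_{i_1}\cdots\tau_{i_k}$ order-isomorphic to $\sigma$ such that, writing $i_0=0$, $i_{k+1}=n+1$, and $v_0=0<v_1<\dots<v_k<v_{k+1}=n+1$ for the sorted values $\{\tau_{i_1},\dots,\tau_{i_k}\}$ together with $0,n+1$, no point $(j,\tau_j)$ lies in the open box $i_a<j<i_{a+1}$, $v_b<\tau_j<v_{b+1}$ for any $(a,b)\in A$. Otherwise $\tau$ avoids it. For a pattern $\sigma$, the map $\mathrm{SC}_\sigma$ acts on $\tau$: read entries left to right; when the next entry $x$ is read, if pushing $x$ yields a stack whose entries read top to bottom (stack adjacency = consecutive positions) avoid $\sigma$, push $x$; otherwise pop the top stack entry to the output and repeat. At the end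 pop all remaining entries; the output is $\mathrm{SC}_\sigma(\tau)$. West's stack-sorting map is $s=\mathrm{SC}_{21}$. $\mathrm{Sort}_n(\mathrm{SC}_\sigma)=\{\tau\in\mathfrak S_n : s(\mathrm{SC}_\sigma(\tau))=12\cdots n\}$. *)

(* Defs.v *)
From mathcomp Require Import all_boot.
Set Implicit Arguments. Unset Strict Implicit. Unset Printing Implicit Defensive.

Definition is_perm (n : nat) (t : seq nat) : bool := perm_eq t (iota 1 n).

Definition order_iso (u p : seq nat) : bool :=
  (size u == size p) &&
  all (fun i => all (fun j =>
      (nth 0 u i < nth 0 u j) == (nth 0 p i < nth 0 p j))
    (iota 0 (size p))) (iota 0 (size p)).

Definition contains_cl (p t : seq nat) : bool :=
  [exists m : (size t).-tuple bool, order_iso (mask m t) p].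

(* vincular pattern \underline{23}1: positions j, j+1, l with l > j+1 and
   a_l < a_j < a_{j+1} (positions 0-indexed here) *)
Definition contains_23_1 (t : seq nat) : bool :=
  has (fun j => has (fun l =>
      (j.+1 < l) && (nth 0 t l < nth 0 t j) && (nth 0 t j < nth 0 t j.+1))
    (iota 0 (size t))) (iota 0 (size t)).

(* One step of the pattern-avoiding stack: insert x into the stack stk (top at
   head), popping entries to the output while pushing x would produce a stack
   (read top to bottom) that fails [avoid]. *)
Fixpoint sc_insert (avoid : seq nat -> bool) (x : nat) (stk out : seq nat)
  : seq nat * seq nat :=
  match stk with
  | [::] => ([:: x], out)
  | y :: stk' =>
      if avoid (x :: stk) then (x :: stk, out)
      else sc_insert avoid x stk' (rcons out y)
  end.

Fixpoint sc_loop (avoid : seq nat -> bool) (t stk out : seq nat) : seq nat :=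
  match t with
  | [::] => out ++ stk
  | x :: t' =>
      let p := sc_insert avoid x stk out in sc_loop avoid t' p.1 p.2
  end.

Definition SC (avoid : seq nat -> bool) (t : seq nat) : seq nat :=
  sc_loop avoid t [::] [::].

Definition SC_23_1 : seq nat -> seq nat := SC (fun s => ~~ contains_23_1 s).

Definition west_s : seq nat -> seq nat := SC (fun s => ~~ contains_cl [:: 2; 1] s).

(* Mesh pattern containment (sigma, A); positions and values are 1-indexed,
   with i_0 = 0, i_{k+1} = n+1, v_0 = 0, v_{k+1} = n+1. *)
Definition contains_mesh (sigma : seq nat) (A : seq (nat * nat)) (t : seq nat)
  : bool :=
  let n := size t in
  [exists m : n.-tuple bool,
    order_iso (mask m t) sigma &&
    let pos := 0 :: [seq i.+1 | i <- iota 0 n & nth false m i] ++ [:: n.+1] in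
    let vals := 0 :: sort leq (mask m t) ++ [:: n.+1] in
    all (fun ab =>
      all (fun j =>
        ~~ [&& nth 0 pos ab.1 < j, j < nth 0 pos ab.1.+1,
               nth 0 vals ab.2 < nth 0 t j.-1 & nth 0 t j.-1 < nth 0 vals ab.2.+1])
      (iota 1 n)) A].

Definition mu2413 : seq nat * seq (nat * nat) :=
  ([:: 2; 4; 1; 3], [:: (1, 0); (2, 1); (2, 2)]).

(* Main.v *)
Require Import Defs.
From mathcomp Require Import all_boot zify.
From Stdlib Require Import Classical_Prop.
Set Implicit Arguments. Unset Strict Implicit. Unset Printing Implicit Defensive.

Lemma mask_nth (m : seq bool) (t : seq nat) : size m = size t ->
  mask m t = [seq nth 0 t i | i <- iota 0 (size t) & nth false m i].
Proof.
elim: t m => [|x t IH] [|b m] //= [Hs].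
rewrite (IH m Hs) -[1]/(1+0) iotaDl filter_map.
have E1 : [seq i <- iota 0 (size t) | preim (addn 1) (nth false (b :: m)) i]
        = [seq i <- iota 0 (size t) | nth false m i] by apply: eq_filter.
rewrite E1.
have E2 : [seq (nth 0 (x :: t) \o addn 1) i | i <- [seq i <- iota 0 (size t) | nth false m i]] = [seq nth 0 t i | i <- [seq i <- iota 0 (size t) | nth false m i]] by apply: eq_map.
by clear E1; case: b => /=; rewrite -map_comp E2.
Qed.

Lemma filter_iota_sorted n : forall (P : pred nat), sorted ltn [seq i <- iota 0 n | P i].
Proof. move=> P; apply: sorted_filter; [exact: ltn_trans| exact: iota_ltn_sorted]. Qed.

Lemma contains_clP (p t : seq nat) :
  contains_cl p t <-> exists I : seq nat, [/\ sorted ltn I, all (fun i => i < size t) I &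
      order_iso (map (nth 0 t) I) p].
Proof.
split.
- move=> /existsP [m Hm]; exists [seq i <- iota 0 (size t) | nth false m i]; split.
  + exact: filter_iota_sorted.
  + by apply/allP => i; rewrite mem_filter mem_iota => /andP [_ /andP [_]].
  + by rewrite -mask_nth // size_tuple.
- move=> [I [HI1 HI2 HI3]].
  apply/existsP.
  have Hsz : size (mkseq (fun i => i \in I) (size t)) == size t by rewrite size_mkseq.
  exists (Tuple Hsz) => /=.
  rewrite mask_nth ?size_mkseq //.
  suff -> : [seq i <- iota 0 (size t) | nth false (mkseq (fun i => i \in I) (size t)) i] = I by [].
  apply: (irr_sorted_eq ltn_trans ltnn); first exact: filter_iota_sorted.
  + by [].
  + move=> i; rewrite mem_filter mem_iota /= add0n.
    case: (ltnP i (size t)) => Hi.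
    * by rewrite nth_mkseq // andbT.
    * rewrite andbF; apply/esym/negP => Hin; move/allP: HI2 => /(_ i Hin); lia.
Qed.

Ltac ltsolve := repeat match goal with
  | |- context [?a < ?b] =>
     first [ have -> : (a < b) = true by lia | have -> : (a < b) = false by lia ]
  end.

Lemma oiso1324 a b c d : order_iso [:: a; b; c; d] [:: 1; 3; 2; 4] = [&& a < c, c < b & b < d].
Proof.
rewrite /order_iso /=.
apply/idP/idP.
- rewrite !ltnn /=. move=> H. repeat (move/andP: H => [/eqP ? H]). lia.
- move=> /and3P [H1 H2 H3]. ltsolve. by [].
Qed.



Lemma oiso2413 a b c d : order_iso [:: a; b; c; d] [:: 2; 4; 1; 3] = [&& c < a, a < d & d < b].
Proof.
rewrite /order_iso /=.
apply/idP/idP.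
- rewrite !ltnn /=. move=> H. repeat (move/andP: H => [/eqP ? H]). lia.
- move=> /and3P [H1 H2 H3]. ltsolve. by [].
Qed.

Lemma sort4 a b c d : c < a -> a < d -> d < b -> sort leq [:: a; b; c; d] = [:: c; a; d; b].
Proof.
move=> H1 H2 H3.
apply: (sorted_eq leq_trans anti_leq); first exact: (sort_sorted leq_total).
  rewrite /=; apply/and4P; split => //; lia.
rewrite (perm_sort leq); apply/permP => P /=; lia.
Qed.

Lemma mask_of_I (t : seq nat) (I : seq nat) : sorted ltn I -> all (fun i => i < size t) I ->
  exists m : (size t).-tuple bool, [seq i <- iota 0 (size t) | nth false m i] = I.
Proof.
move=> HI1 HI2.
have Hsz : size (mkseq (fun i => i \in I) (size t)) == size t by rewrite size_mkseq.
exists (Tuple Hsz) => /=.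
apply: (irr_sorted_eq ltn_trans ltnn); first exact: filter_iota_sorted.
+ by [].
+ move=> i; rewrite mem_filter mem_iota /= add0n.
  case: (ltnP i (size t)) => Hi.
  * by rewrite nth_mkseq // andbT.
  * rewrite andbF; apply/esym/negP => Hin; move/allP: HI2 => /(_ i Hin); lia.
Qed.

Definition MB (t : seq nat) i j k l :=
  (forall r, i < r < j -> ~~ (0 < nth 0 t r < nth 0 t k)) /\
  (forall r, j < r < k -> ~~ (nth 0 t k < nth 0 t r < nth 0 t i) && ~~ (nth 0 t i < nth 0 t r < nth 0 t l)).

Lemma containsMuP t : contains_mesh mu2413.1 mu2413.2 t <->
  exists i j k l, [/\ i < j < k, k < l < size t,
     (nth 0 t k < nth 0 t i < nth 0 t l) && (nth 0 t l < nth 0 t j) & MB t i j k l].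
Proof.
split.
- move=> /existsP [m /andP [Hiso Hall]].
  rewrite mask_nth ?size_tuple // in Hiso Hall.
  have Hlt : all (fun i => i < size t) [seq i <- iota 0 (size t) | nth false m i].
    by apply/allP => i; rewrite mem_filter mem_iota => /andP [_ /andP [_]].
  move: (filter_iota_sorted (size t) (nth false m)) Hlt Hiso Hall.
  move: [seq i <- iota 0 (size t) | nth false m i] => I.
  case: I => [|i [|j [|k [|l [|? ?]]]]] //= Hs Hlt Hiso Hall.
  rewrite oiso2413 in Hiso.
  move/and3P: Hiso => [H1 H2 H3].
  rewrite sort4 // in Hall.
  move: Hall => /= /and4P [A1 A2 A3 _].
  move: Hs Hlt => /and4P [Hij Hjk Hkl _] /and5P [_ _ _ Hl _].
  exists i, j, k, l; split.
  + by rewrite Hij Hjk.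
  + by rewrite Hkl Hl.
  + by rewrite H1 H2 H3.
  + split.
    * move=> r /andP [Hr1 Hr2].
      move/allP: A1 => /(_ r.+1); rewrite mem_iota /=.
      have Hx : r.+1 < 1 + size t by lia.
      by move=> /(_ Hx); rewrite !ltnS Hr1 Hr2.
    * move=> r /andP [Hr1 Hr2].
      move/allP: A2 => /(_ r.+1); rewrite mem_iota /=.
      have Hx : r.+1 < 1 + size t by lia.
      move=> /(_ Hx); rewrite !ltnS Hr1 Hr2 /= => ->.
      move/allP: A3 => /(_ r.+1); rewrite mem_iota /=.
      by move=> /(_ Hx); rewrite !ltnS Hr1 Hr2 /= => ->.
- move=> [i [j [k [l [/andP [Hij Hjk] /andP [Hkl Hl] /andP [/andP [H1 H2] H3] [B1 B2]]]]]].
  have [m Hm] : exists m : (size t).-tuple bool, [seq i <- iota 0 (size t) | nth false m i] = [:: i; j; k; l].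
    apply: mask_of_I; rewrite /=; [by rewrite Hij Hjk Hkl | ].
    apply/and5P; split => //; lia.
  apply/existsP; exists m; apply/andP; split.
  + by rewrite mask_nth ?size_tuple // Hm oiso2413 H1 H2 H3.
  + rewrite mask_nth ?size_tuple // Hm /= sort4 //=.
    apply/and4P; split => //.
    * apply/allP => J; rewrite mem_iota => /andP [HJ1 HJ2].
      case: J HJ1 HJ2 => [|r] //= _ HJ2.
      apply/negP => /and4P [Hr1 Hr2 Hr3 Hr4].
      have : i < r < j by lia.
      by move=> /B1; rewrite Hr3 Hr4.
    * apply/allP => J; rewrite mem_iota => /andP [HJ1 HJ2].
      case: J HJ1 HJ2 => [|r] //= _ HJ2.
      apply/negP => /and4P [Hr1 Hr2 Hr3 Hr4].
      have : j < r < k by lia.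
      by move=> /B2; rewrite Hr3 Hr4.
    * apply/allP => J; rewrite mem_iota => /andP [HJ1 HJ2].
      case: J HJ1 HJ2 => [|r] //= _ HJ2.
      apply/negP => /and4P [Hr1 Hr2 Hr3 Hr4].
      have : j < r < k by lia.
      by move=> /B2; rewrite Hr3 Hr4 andbF.
Qed.

Lemma oiso21 a b : order_iso [:: a; b] [:: 2; 1] = (b < a).
Proof.
rewrite /order_iso /= !ltnn /=.
case: (ltngtP a b) => H //=.
Qed.

Lemma contains21P (s : seq nat) : contains_cl [:: 2; 1] s <-> exists i j, [/\ i < j, j < size s & nth 0 s j < nth 0 s i].
Proof.
rewrite contains_clP; split.
- move=> [[|i [|j [|? ?]]]] [Hs Hl Hiso] //.
  move: Hiso; rewrite map_cons oiso21 => H.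
  move: Hs Hl => /andP [Hij _] /and3P [_ Hj _].
  by exists i, j.
- move=> [i [j [Hij Hj H]]]; exists [:: i; j]; split => /=.
  + by rewrite Hij.
  + rewrite Hj andbT; lia.
  + by rewrite oiso21.
Qed.

Lemma contains21_cons x (s : seq nat) :
  contains_cl [:: 2; 1] (x :: s) = contains_cl [:: 2; 1] s || has (fun y => y < x) s.
Proof.
apply/idP/idP.
- move/contains21P => [[|i] [[|j] [Hij Hj H]]] //=.
  + apply/orP; right; apply/hasP; exists (nth 0 s j) => //; apply: mem_nth; move: Hj; rewrite /= ltnS; by [].
  + apply/orP; left; apply/contains21P; exists i, j; split; [lia | move: Hj; rewrite /= ltnS; by [] | exact: H].
- case/orP.
  + move/contains21P => [i [j [Hij Hj H]]]; apply/contains21P; exists i.+1, j.+1; split => //=; lia.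
  + move/hasP => [y Hy Hyx]; apply/contains21P; exists 0, (index y s).+1; split => //=.
    * by rewrite ltnS index_mem.
    * by rewrite nth_index.
Qed.

Lemma contains21_nil : contains_cl [:: 2; 1] [::] = false.
Proof. case E: (contains_cl _ _) => //; move: E => /contains21P [i [j [_ Hj _]]] //. Qed.

Lemma contains21_pairwise (s : seq nat) : ~~ contains_cl [:: 2; 1] s = pairwise leq s.
Proof.
elim: s => [|x s IH]; first by rewrite contains21_nil.
rewrite contains21_cons pairwise_cons negb_or IH andbC; congr (_ && _).
rewrite -all_predC; apply: eq_all => y /=; rewrite -leqNgt; by [].
Qed.

Lemma contains1324P (t : seq nat) : contains_cl [:: 1; 3; 2; 4] t <->
  exists i j k l, [/\ i < j < k, k < l < size t & (nth 0 t i < nth 0 t k < nth 0 t j) && (nth 0 t j < nth 0 t l)].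
Proof.
rewrite contains_clP; split.
- move=> [[|i [|j [|k [|l [|? ?]]]]]] [Hs Hl Hiso] //.
  move: Hiso; rewrite !map_cons oiso1324 => /and3P [H1 H2 H3].
  move: Hs Hl => /= /and4P [Hij Hjk Hkl _] /and5P [_ _ _ Hl _].
  exists i, j, k, l; split.
  + by rewrite Hij Hjk.
  + by rewrite Hkl Hl.
  + by rewrite H1 H2 H3.
- move=> [i [j [k [l [/andP [Hij Hjk] /andP [Hkl Hl] /andP [/andP [H1 H2] H3]]]]]].
  exists [:: i; j; k; l]; split => /=.
  + by rewrite Hij Hjk Hkl.
  + apply/and5P; split => //; lia.
  + by rewrite oiso1324 H1 H2 H3.
Qed.

Lemma c231P (s : seq nat) : contains_23_1 s <->
  exists j l, [/\ j.+1 < l, l < size s & nth 0 s l < nth 0 s j < nth 0 s j.+1].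
Proof.
rewrite /contains_23_1; split.
- move/hasP => [j _ /hasP [l Hl /andP [/andP [H1 H2] H3]]].
  move: Hl; rewrite mem_iota add0n => /andP [_ Hl].
  by exists j, l; rewrite H2 H3.
- move=> [j [l [H1 H2 /andP [H3 H4]]]].
  apply/hasP; exists j; first by rewrite mem_iota; lia.
  apply/hasP; exists l; first by rewrite mem_iota; lia.
  by rewrite H1 H3 H4.
Qed.

Lemma c231_cons x (s : seq nat) :
  contains_23_1 (x :: s) = contains_23_1 s || ((x < head 0 s) && has (fun y => y < x) (behead s)).
Proof.
apply/idP/idP.
- move/c231P => [[|j] [l [H1 H2 H3]]].
  + apply/orP; right; case: s H2 H3 H1 => [|y s] /= H2 H3 H1; first lia.
    move/andP: H3 => [H3 H4]; rewrite H4 /=; apply/hasP.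
    case: l H1 H2 H3 => [|[|l]] //= H1 H2 H3.
    exists (nth 0 s l) => //; apply: mem_nth; by rewrite !ltnS in H2.
  + apply/orP; left; apply/c231P; exists j, l.-1; split => //=.
    * lia.
    * simpl in H2; lia.
    * case: l H1 H2 H3 => [|l] //=.
- case/orP.
  + move/c231P => [j [l [H1 H2 H3]]]; apply/c231P; exists j.+1, l.+1; split => //.
  + case: s => [|y s] //= /andP [Hxy /hasP [z Hz Hzx]].
    apply/c231P; exists 0, (index z s).+2; split => //=.
    * by rewrite !ltnS index_mem.
    * by rewrite nth_index // Hzx Hxy.
Qed.

Lemma c231_nil : contains_23_1 [::] = false.
Proof. by []. Qed.

Definition scstep (p : seq nat * seq nat) (x : nat) : seq nat * seq nat :=
  if all (fun y => x < y) p.1 then (x :: p.1, p.2)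
  else (x :: drop (find (fun y => ~~ (x < y)) p.1) p.1,
        p.2 ++ take (find (fun y => ~~ (x < y)) p.1) p.1).

Definition wstep (p : seq nat * seq nat) (x : nat) : seq nat * seq nat :=
  (x :: drop (find (fun y => ~~ (y < x)) p.1) p.1,
   p.2 ++ take (find (fun y => ~~ (y < x)) p.1) p.1).

Lemma sc_insert_eq x stk out : ~~ contains_23_1 stk -> x \notin stk ->
  sc_insert (fun s => ~~ contains_23_1 s) x stk out = scstep (stk, out) x.
Proof.
elim: stk out => [|y s IH] out //= Hc Hx.
rewrite c231_cons (negbTE Hc) /=.
have Hs : ~~ contains_23_1 s by move: Hc; rewrite c231_cons negb_or => /andP [].
rewrite in_cons negb_or in Hx; move/andP: Hx => [Hxy Hxs].
rewrite /scstep /=.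
case Exy: (x < y) => /=.
- case Eh: (has (fun y0 => y0 < x) s) => /=.
  + rewrite IH // /scstep /=.
    have -> : all (fun y0 => x < y0) s = false.
      apply/negbTE; move/hasP: Eh => [z Hz Hzx]; apply/allPn; exists z => //; rewrite -leqNgt ltnW //.
    by rewrite cat_rcons.
  + have -> : all (fun y0 => x < y0) s.
      apply/allP => z Hz; move/hasPn: Eh => /(_ z Hz); rewrite -leqNgt leq_eqVlt => /orP [/eqP E|//].
        by move: Hxs; rewrite E Hz.
    by [].
- by rewrite cats0.
Qed.

Lemma w_insert_eq x stk out : pairwise leq stk ->
  sc_insert (fun s => ~~ contains_cl [:: 2; 1] s) x stk out = wstep (stk, out) x.
Proof.
elim: stk out => [|y s IH] out //= Hp.
- by rewrite /wstep /= cats0.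
move/andP: Hp => [Hall Hs].
have Hc : ~~ contains_cl [:: 2; 1] (y :: s) by rewrite contains21_pairwise /= Hall Hs.
rewrite contains21_cons negb_or Hc /= /wstep /=.
case Eyx: (y < x) => /=.
- rewrite IH // /wstep /=; by rewrite cat_rcons.
- have -> : has (fun y0 => y0 < x) s = false.
    apply/hasPn => z Hz; move/allP: Hall => /(_ z Hz) Hyz; rewrite -leqNgt.
    apply: leq_trans Hyz; by rewrite leqNgt Eyx.
  by rewrite cats0.
Qed.

Lemma sc_loop_foldl A t stk out :
  sc_loop A t stk out =
  (foldl (fun p x => sc_insert A x p.1 p.2) (stk, out) t).2 ++
  (foldl (fun p x => sc_insert A x p.1 p.2) (stk, out) t).1.
Proof.
elim: t stk out => [|x t IH] stk out //=.
rewrite IH; by case: (sc_insert A x stk out).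
Qed.

Definition scstate (u : seq nat) := foldl scstep ([::], [::]) u.
Definition wstate (u : seq nat) := foldl wstep ([::], [::]) u.

Lemma pairwise_idx (r : rel nat) (s : seq nat) a b : pairwise r s -> a \in s -> b \in s ->
  index a s < index b s -> r a b.
Proof.
move=> /(pairwiseP 0) H Ha Hb Hab.
rewrite -(nth_index 0 Ha) -(nth_index 0 Hb); apply: H => //; rewrite inE /= index_mem //.
Qed.

Lemma index_rcons_in (u : seq nat) x y : y \in u -> index y (rcons u x) = index y u.
Proof. by move=> Hy; rewrite -cats1 index_cat Hy. Qed.

Lemma index_rcons_x (u : seq nat) x : x \notin u -> index x (rcons u x) = size u.
Proof. by move=> Hx; rewrite -cats1 index_cat (negbTE Hx) /= eqxx addn0. Qed.

Lemma pairwise_drop (r : rel nat) k (s : seq nat) : pairwise r s -> pairwise r (drop k s).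
Proof. by rewrite -{1}(cat_take_drop k s) pairwise_cat => /and3P []. Qed.

Lemma pairwise_take (r : rel nat) k (s : seq nat) : pairwise r s -> pairwise r (take k s).
Proof. by rewrite -{1}(cat_take_drop k s) pairwise_cat => /and3P []. Qed.

Lemma index_cat_l (O R : seq nat) a : a \in O -> index a (O ++ R) = index a O.
Proof. by move=> Ha; rewrite index_cat Ha. Qed.

Lemma index_cat_r (O R : seq nat) a : a \notin O -> index a (O ++ R) = size O + index a R.
Proof. by move=> Ha; rewrite index_cat (negbTE Ha). Qed.

Lemma index_drop_lt (s : seq nat) k a b : uniq s -> a \in drop k s -> b \in drop k s ->
  (index a (drop k s) < index b (drop k s)) = (index a s < index b s).
Proof.
move=> Hu Ha Hb.
have Hd : [predI (mem (take k s)) & (mem (drop k s))] =1 pred0.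
  move=> y /=; apply/andP => [[H1 H2]].
  by move: Hu; rewrite -(cat_take_drop k s) cat_uniq => /and3P [_ /hasPn /(_ y H2) /negP].
have Ha' : a \notin take k s by apply/negP => H; move: (Hd a) => /=; rewrite H Ha.
have Hb' : b \notin take k s by apply/negP => H; move: (Hd b) => /=; rewrite H Hb.
transitivity (index a (take k s ++ drop k s) < index b (take k s ++ drop k s)); last by rewrite cat_take_drop.
by rewrite !index_cat_r // ltn_add2l.
Qed.

Lemma all_take_find (a : pred nat) (s : seq nat) : all (fun y => ~~ a y) (take (find a s) s).
Proof. elim: s => [|y s IH] //=; case E: (a y) => //=; by rewrite E IH. Qed.

Lemma mem_take_find (a : pred nat) (s : seq nat) y : y \in take (find a s) s -> ~~ a y.
Proof. by move=> H; move/allP: (all_take_find a s) => /(_ y H). Qed.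

Lemma pairwise_ins (r : rel nat) (A B : seq nat) x :
  pairwise r (A ++ x :: B) = [&& pairwise r (A ++ B), all (fun a => r a x) A & all (r x) B].
Proof.
rewrite !pairwise_cat pairwise_cons /= allrel_consr.
case: (allrel r A B); case: (pairwise r A); case: (pairwise r B); case: (all _ A); case: (all _ B) => //.
Qed.

Definition has231 (w : seq nat) := exists a b c, [/\ a \in w, b \in w, c \in w &
  [&& index a w < index b w, index b w < index c w, c < a & a < b]].

Lemma has231_rcons (u : seq nat) x : uniq (rcons u x) ->
  has231 (rcons u x) <-> has231 u \/ exists a b, [/\ a \in u, b \in u, index a u < index b u & (x < a) && (a < b)].
Proof.
rewrite rcons_uniq => /andP [Hx Hu].
have Hidx : forall y, y \in rcons u x -> y != x -> y \in u.
  by move=> y; rewrite mem_rcons inE => /orP [/eqP ->|//]; rewrite eqxx.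
have Hix := index_rcons_x Hx.
split.
- move=> [a [b [c [Ha Hb Hc /and4P [H1 H2 H3 H4]]]]].
  have Hcs : index c (rcons u x) <= size u by rewrite -ltnS -(size_rcons u x) index_mem.
  have Hax : a != x by apply/eqP => E; move: H1 H2 Hcs; rewrite E Hix; lia.
  have Hbx : b != x by apply/eqP => E; move: H2 Hcs; rewrite E Hix; lia.
  have Ha' := Hidx a Ha Hax; have Hb' := Hidx b Hb Hbx.
  rewrite (index_rcons_in x Ha') (index_rcons_in x Hb') in H1 H2.
  case: (eqVneq c x) => [E|Hcx].
  + right; exists a, b; split => //; by rewrite -E H3 H4.
  + have Hc' := Hidx c Hc Hcx; rewrite index_rcons_in // in H2.
    left; exists a, b, c; split => //; by rewrite H1 H2 H3 H4.
- move=> [[a [b [c [Ha Hb Hc /and4P [H1 H2 H3 H4]]]]] | [a [b [Ha Hb H1 /andP [H3 H4]]]]].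
  + exists a, b, c; rewrite !mem_rcons !inE Ha Hb Hc !orbT !index_rcons_in //; split => //.
    by rewrite H1 H2 H3 H4.
  + exists a, b, x; rewrite !mem_rcons !inE Ha Hb eqxx !orbT (index_rcons_in x Ha) (index_rcons_in x Hb) Hix; split => //.
    rewrite H1 H3 H4 /= index_mem andbT; exact: Hb.
Qed.

Definition later_larger (u : seq nat) y := exists z, [/\ z \in u, index y u < index z u & y < z].

Definition WInv (u : seq nat) (p : seq nat * seq nat) :=
  [/\ perm_eq (p.2 ++ p.1) u, (forall y, y \in u -> (y \in p.2 <-> later_larger u y)) & pairwise leq p.1].

Lemma drop_find_ge x (s : seq nat) : pairwise leq s ->
  forall y, y \in drop (find (fun y => ~~ (y < x)) s) s -> x <= y.
Proof.
elim: s => [|z s IH] //= /andP [Hall Hs] y.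
case E: (z < x) => /=.
- exact: IH.
- rewrite inE => /orP [/eqP ->|Hy]; first by rewrite leqNgt E.
  move/allP: Hall => /(_ y Hy); apply: leq_trans; by rewrite leqNgt E.
Qed.

Lemma ll_rcons (u : seq nat) x y : x \notin u -> y \in u ->
  later_larger (rcons u x) y <-> later_larger u y \/ y < x.
Proof.
move=> Hx Hy; split.
- move=> [z [Hz Hi Hyz]]; move: Hz; rewrite mem_rcons inE => /orP [/eqP E|Hz].
  + by right; rewrite -E.
  + by left; exists z; rewrite !index_rcons_in // in Hi.
- move=> [[z [Hz Hi Hyz]]|Hyx].
  + by exists z; rewrite !index_rcons_in // mem_rcons inE Hz orbT.
  + exists x; rewrite index_rcons_in // index_rcons_x // index_mem mem_rcons inE eqxx; by [].
Qed.

Lemma ll_rcons_x (u : seq nat) x : x \notin u -> ~ later_larger (rcons u x) x.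
Proof.
move=> Hx [z [Hz Hi _]]; move: Hi; rewrite index_rcons_x //.
have : index z (rcons u x) < size (rcons u x) by rewrite index_mem.
rewrite size_rcons; lia.
Qed.

Lemma perm_step (u out stk T D : seq nat) x : perm_eq (out ++ stk) u -> stk = T ++ D ->
  perm_eq ((out ++ T) ++ x :: D) (rcons u x).
Proof.
move=> /permP Hp E; apply/permP => P.
move: (Hp P); rewrite -cats1 !count_cat E count_cat /=; lia.
Qed.

Lemma wstate_inv u : uniq u -> WInv u (wstate u).
Proof.
elim/last_ind: u => [|u x IH]; first by rewrite /WInv /=; split => // y; rewrite in_nil.
rewrite rcons_uniq => /andP [Hx Hu].
rewrite /wstate foldl_rcons -/(wstate u).
move: (IH Hu); case: (wstate u) => stk out [Hperm Hmem Hpw].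
rewrite /wstep /=.
set k := find (fun y => ~~ (y < x)) stk.
have HT : forall y, y \in take k stk -> y < x by move=> y /mem_take_find; rewrite negbK.
have HD : forall y, y \in drop k stk -> x <= y by apply: drop_find_ge.
have Hsub : forall y, y \in out ++ stk -> y \in u by move=> y; rewrite (perm_mem Hperm).
split => /=.
- apply: perm_step Hperm _; by rewrite cat_take_drop.
- move=> y; rewrite mem_rcons inE => /orP [/eqP ->|Hy].
  + split => [H|/(ll_rcons_x Hx)] //; exfalso.
    move: Hx; rewrite -(perm_mem Hperm) mem_cat; move: H; rewrite mem_cat => /orP [->//|/mem_take]; by move=> ->; rewrite orbT.
  + rewrite ll_rcons // -Hmem // mem_cat; split.
    * move=> /orP [->|H]; [by left|right; exact: HT].
    * move=> [->//|Hyx]; apply/orP.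
      have : y \in out ++ stk by rewrite (perm_mem Hperm).
      rewrite mem_cat => /orP [->|Hs]; [by left|right].
      move: Hs; rewrite -{1}(cat_take_drop k stk) mem_cat => /orP [//|/HD]; lia.
- rewrite (pairwise_drop k Hpw) andbT; apply/allP => y; exact: HD.
Qed.

Lemma west_sorted u : uniq u -> (pairwise ltn ((wstate u).2 ++ (wstate u).1) <-> ~ has231 u).
Proof.
elim/last_ind: u => [|u x IH].
- move=> _; rewrite /wstate /=; split => // _ [a [b [c [Ha _ _ _]]]]; by rewrite in_nil in Ha.
move=> Hux; have := Hux; rewrite rcons_uniq => /andP [Hx Hu].
rewrite has231_rcons //.
move: (IH Hu) (wstate_inv Hu).
rewrite /wstate foldl_rcons -/(wstate u).
case: (wstate u) => stk out /= IH' [Hperm Hmem Hpw].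
rewrite /wstep /=.
set k := find (fun y => ~~ (y < x)) stk.
have HT : forall y, y \in take k stk -> y < x by move=> y /mem_take_find; rewrite negbK.
have HD : forall y, y \in drop k stk -> x <= y by apply: drop_find_ge.
have Hxs : x \notin out ++ stk by rewrite (perm_mem Hperm).
rewrite pairwise_ins -catA cat_take_drop all_cat.
have -> : all (fun a => a < x) (take k stk) by apply/allP.
have -> : all (ltn x) (drop k stk).
  apply/allP => y Hy; rewrite /= ltn_neqAle HD // andbT.
  apply/eqP => E; move: Hxs; rewrite mem_cat E -(cat_take_drop k stk) mem_cat Hy; by rewrite !orbT.
split.
- move=> /and3P [Hp Hall _] [H|[a [b [Ha Hb Hab /andP [H1 H2]]]]]; first by move/IH': Hp.
  have : a \in out by apply/Hmem => //; exists b.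
  move=> Hao; rewrite andbT in Hall; have := allP Hall a Hao; rewrite /=; lia.
- move=> H; apply/and3P; split => //; rewrite ?andbT; first by apply/IH' => H'; apply: H; left.
  apply/allP => a Hao.
  have Hau : a \in u by rewrite -(perm_mem Hperm) mem_cat Hao.
  have [z [Hz Hi Haz]] : later_larger u a by apply/Hmem.
  rewrite /= ltn_neqAle; apply/andP; split.
  + apply/eqP => E; move: Hx; by rewrite -E Hau.
  + rewrite leqNgt; apply/negP => Hxa; apply: H; right; exists a, z; split => //; by rewrite Hxa Haz.
Qed.

Definition LRmin (u : seq nat) q := forall r, r < q -> nth 0 u q < nth 0 u r.
Definition firstsm (u : seq nat) p q := [/\ p < q, q < size u, nth 0 u q < nth 0 u p &
  forall r, p < r < q -> nth 0 u p < nth 0 u r].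
Definition Ef (u : seq nat) p := exists q, firstsm u p q /\ ~ LRmin u q.
Definition RLmin (u : seq nat) p := forall r, p < r < size u -> nth 0 u p < nth 0 u r.

Lemma nth_rc (u : seq nat) x i : i < size u -> nth 0 (rcons u x) i = nth 0 u i.
Proof. by move=> H; rewrite nth_rcons H. Qed.

Lemma nth_rc_last (u : seq nat) x : nth 0 (rcons u x) (size u) = x.
Proof. by rewrite nth_rcons ltnn eqxx. Qed.

Lemma firstsm_rcons u x p q : q < size u -> firstsm (rcons u x) p q <-> firstsm u p q.
Proof.
move=> Hq; split.
- move=> [H1 H2 H3 H4]; have Hpu : p < size u by lia.
  split => //.
  + by rewrite -(nth_rc x Hq) -(nth_rc x Hpu).
  + move=> r Hr; have Hru : r < size u by lia.
    rewrite -(nth_rc x Hpu) -(nth_rc x Hru); exact: H4.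
- move=> [H1 H2 H3 H4]; have Hpu : p < size u by lia.
  split => //.
  + rewrite size_rcons; lia.
  + by rewrite (nth_rc x Hq) (nth_rc x Hpu).
  + move=> r Hr; have Hru : r < size u by lia.
    rewrite (nth_rc x Hpu) (nth_rc x Hru); exact: H4.
Qed.

Lemma LRmin_rcons u x q : q < size u -> LRmin (rcons u x) q <-> LRmin u q.
Proof.
move=> Hq; split => H r Hr; have Hru : r < size u by lia.
- by rewrite -(nth_rc x Hq) -(nth_rc x Hru); apply: H.
- by rewrite (nth_rc x Hq) (nth_rc x Hru); apply: H.
Qed.

Lemma RLmin_rcons u x p : p < size u -> RLmin (rcons u x) p <-> RLmin u p /\ nth 0 u p < x.
Proof.
move=> Hp; split.
- move=> H; split.
  + move=> r Hr; have Hru : r < size u by lia.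
    rewrite -(nth_rc x Hp) -(nth_rc x Hru); apply: H; rewrite size_rcons; lia.
  + rewrite -(nth_rc x Hp) -{2}(nth_rc_last u x); apply: H; rewrite size_rcons; lia.
- move=> [H1 H2] r; rewrite size_rcons => Hr.
  case: (ltngtP r (size u)) => Hr'.
  + rewrite (nth_rc x Hp) (nth_rc x Hr'); apply: H1; lia.
  + lia.
  + by rewrite Hr' nth_rc_last (nth_rc x Hp).
Qed.

Lemma RLmin_last u x : RLmin (rcons u x) (size u).
Proof. move=> r; rewrite size_rcons; lia. Qed.

Lemma Ef_rcons u x p : p < size u -> Ef (rcons u x) p <->
  Ef u p \/ [/\ RLmin u p, x < nth 0 u p & ~ (forall r, r < size u -> x < nth 0 u r)].
Proof.
move=> Hp; split.
- move=> [q [Hf HL]].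
  have Hq : q < size (rcons u x) by case: Hf.
  rewrite size_rcons in Hq.
  case: (ltngtP q (size u)) => Hq'.
  + left; exists q; split; first by apply/(firstsm_rcons x).
    by move=> H; apply: HL; apply/LRmin_rcons.
  + lia.
  + subst q; right; case: Hf => H1 H2 H3 H4; split.
    * move=> r Hr; rewrite -(nth_rc x Hp); have Hru : r < size u by lia.
      rewrite -(nth_rc x Hru); apply: H4; lia.
    * by rewrite -(nth_rc x Hp) -{1}(nth_rc_last u x).
    * move=> H; apply: HL => r Hr; rewrite nth_rc_last (nth_rc x Hr); exact: H.
- move=> [[q [Hf HL]]|[H1 H2 H3]].
  + have Hq : q < size u by case: Hf.
    exists q; split; first by apply/firstsm_rcons.
    by move=> H; apply: HL; apply/(LRmin_rcons x).
  + exists (size u); split.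
    * split => //; first by rewrite size_rcons.
      - by rewrite nth_rc_last (nth_rc x Hp).
      - move=> r Hr; have Hru : r < size u by lia.
        rewrite (nth_rc x Hp) (nth_rc x Hru); apply: H1; lia.
    * move=> H; apply: H3 => r Hr; rewrite -(nth_rc_last u x) -(nth_rc x Hr); exact: H.
Qed.

Lemma Ef_last u x : ~ Ef (rcons u x) (size u).
Proof. move=> [q [[H1 H2 _ _] _]]; rewrite size_rcons in H2; lia. Qed.

Lemma drop_find_le x (s : seq nat) : pairwise (fun a b => b < a) s ->
  forall y, y \in drop (find (fun y => ~~ (x < y)) s) s -> y <= x.
Proof.
elim: s => [|z s IH] //= /andP [Hall Hs] y.
case E: (x < z) => /=.
- exact: IH.
- rewrite inE => /orP [/eqP ->|Hy]; first by rewrite leqNgt E.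
  move/allP: Hall => /(_ y Hy) /= Hyz; move: E => /negbT; rewrite -leqNgt; lia.
Qed.

Lemma c231_drop k (s : seq nat) : ~~ contains_23_1 s -> ~~ contains_23_1 (drop k s).
Proof.
elim: s k => [|y s IH] [|k] //= H; apply: IH; move: H; rewrite c231_cons negb_or => /andP [] //.
Qed.

Lemma take_catl k (P s : seq nat) : k <= size P -> take k (P ++ s) = take k P.
Proof.
move=> Hk; rewrite take_cat; case: ltnP => // H.
have -> : k = size P by lia.
by rewrite subnn take0 cats0 take_size.
Qed.

Lemma drop_catl k (P s : seq nat) : k <= size P -> drop k (P ++ s) = drop k P ++ s.
Proof.
move=> Hk; rewrite drop_cat; case: ltnP => // H.
have -> : k = size P by lia.
by rewrite subnn drop0 drop_size.
Qed.

Lemma find_stk x (P rest : seq nat) l : ~~ (x < l) ->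
  find (fun y => ~~ (x < y)) (P ++ l :: rest) = find (fun y => ~~ (x < y)) P.
Proof.
move=> Hl; rewrite find_cat /= Hl addn0.
case: ifP => // /negbT H; by rewrite hasNfind.
Qed.

Definition SInv (u : seq nat) (p : seq nat * seq nat) :=
 [/\ perm_eq (p.2 ++ p.1) u,
     (forall i, i < size u -> (nth 0 u i \in p.2 <-> Ef u i)),
     pairwise (fun a b => index b u < index a u) p.1,
     ~~ contains_23_1 p.1 &
     (u <> [::] -> exists P l rest, [/\ p.1 = P ++ l :: rest, l \in u, (forall y, y \in u -> l <= y),
        pairwise (fun a b => b < a) P &
        forall i, i < size u -> (nth 0 u i \in P <-> RLmin u i /\ nth 0 u i <> l)])].

Lemma sinv_nil x : SInv [:: x] ([:: x], [::]).
Proof.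
split => //=.
- move=> i; rewrite ltnS leqn0 => /eqP ->; rewrite in_nil; split => // [[q [[H1 H2 _ _] _]]].
  simpl in H2; lia.
- move=> _; exists [::], x, [::]; split => //.
  + by rewrite inE.
  + by move=> y; rewrite inE => /eqP ->.
  + move=> i; rewrite ltnS leqn0 => /eqP ->; rewrite in_nil; split => // [[_ H]]; exfalso; by apply: H.
Qed.

Lemma sinv_step u x stk out : uniq (rcons u x) -> SInv u (stk, out) ->
  SInv (rcons u x) (scstep (stk, out) x).
Proof.
rewrite rcons_uniq => /andP [Hx Hu] [Ha Hb Hc Hd He] /=; simpl in Ha, Hb, Hc, Hd, He.
have Hsub : forall y, y \in out ++ stk -> y \in u by move=> y; rewrite (perm_mem Ha).
have Hstk : forall y, y \in stk -> y \in u by move=> y Hy; apply: Hsub; rewrite mem_cat Hy orbT.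
have Hout : forall y, y \in out -> y \in u by move=> y Hy; apply: Hsub; rewrite mem_cat Hy.
have Hxstk : x \notin stk by apply/negP => /Hstk; apply/negP.
have Hxout : x \notin out by apply/negP => /Hout; apply/negP.
have Hidx : {in u &, (fun a b => index b (rcons u x) < index a (rcons u x)) =2 (fun a b => index b u < index a u)}.
  by move=> a b Ha' Hb' /=; rewrite !index_rcons_in.
have Huo : uniq (out ++ stk) by rewrite (perm_uniq Ha).
have [Hu0|Hun] := eqVneq u [::].
- subst u; move: (perm_size Ha); rewrite size_cat /= => Hs0.
  have -> : stk = [::] by apply: size0nil; clear -Hs0; lia.
  have -> : out = [::] by apply: size0nil; clear -Hs0; lia.
  rewrite /scstep /=; exact: sinv_nil.
have [P [l [rest [Estk Hlu Hlmin HP HPm]]]] := He (elimN eqP Hun).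
have Hlx : l != x by apply/eqP => E; move: Hx; rewrite -E Hlu.
have Hls : l \in stk by rewrite Estk mem_cat inE eqxx orbT.
have HPu : forall y, y \in P -> y \in u by move=> y Hy; apply: Hstk; rewrite Estk mem_cat Hy.
have Hnthu : forall i, i < size u -> nth 0 u i \in u by move=> i Hi; apply: mem_nth.
case: (ltngtP x l) => Hxl; last first.
- by move: Hlx; rewrite Hxl eqxx.
-
  have Hall : all (fun y => x < y) stk = false.
    by apply/negbTE/allPn; exists l => //; rewrite -leqNgt ltnW.
  rewrite /scstep /= Hall /=.
  set k := find (fun y => ~~ (x < y)) stk.
  have Hk : k = find (fun y => ~~ (x < y)) P by rewrite /k Estk find_stk // -leqNgt ltnW.
  have HkP : k <= size P by rewrite Hk find_size.
  have Htake : take k stk = take k P by rewrite Estk take_catl.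
  have Hdrop : drop k stk = drop k P ++ l :: rest by rewrite Estk drop_catl.
  have HT : forall y, y \in take k P -> x < y.
    by move=> y; rewrite Hk => /mem_take_find; rewrite negbK.
  have HD : forall y, y \in drop k P -> y < x.
    move=> y Hy; have := @drop_find_le x P HP; rewrite -Hk => /(_ y Hy).
    rewrite leq_eqVlt => /orP [/eqP E|//]; exfalso.
    by move: Hx; rewrite -E (HPu y (mem_drop Hy)).
  rewrite Htake Hdrop.
  split => /=.
  + apply: perm_step Ha _; by rewrite Estk -{1}(cat_take_drop k P) catA.
  + move=> i; rewrite size_rcons ltnS leq_eqVlt => /orP [/eqP ->|Hi].
    * rewrite nth_rc_last; split => [|/Ef_last //].
      rewrite mem_cat (negbTE Hxout) /= => /mem_take H.
      by move: Hxstk; rewrite Estk mem_cat H.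
    * rewrite (nth_rc x Hi) Ef_rcons // mem_cat -Hb //; split.
      - move=> /orP [->|Hy]; first by left.
        right; split.
        + by have := HPm i Hi; rewrite (mem_take Hy) => /proj1 /(_ isT) [].
        + exact: HT.
        + move=> H; have := H (index l u); rewrite index_mem nth_index // => /(_ Hlu) H'; clear -H' Hxl; lia.
      - move=> [->//|[H1 H2 H3]]; apply/orP; right.
        have HiP : nth 0 u i \in P.
          apply/HPm => //; split => // E; move: H2; rewrite E => H2; clear -H2 Hxl; lia.
        move: HiP; rewrite -{1}(cat_take_drop k P) mem_cat => /orP [//|/HD H']; clear -H' H2; lia.
  + apply/andP; split.
    * apply/allP => y Hy; have Hyu : y \in u.
        apply: Hstk; rewrite Estk mem_cat; move: Hy; rewrite mem_cat => /orP [/mem_drop ->//|->]; by rewrite orbT.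
      by rewrite /= index_rcons_in // index_rcons_x // index_mem.
    * rewrite -Hdrop (eq_in_pairwise Hidx); first exact: pairwise_drop.
      apply/allP => y /mem_drop; exact: Hstk.
  + rewrite c231_cons negb_or -Hdrop c231_drop //=.
    apply/negP => /andP [H _]; move: H.
    have Hhas : has (fun y => ~~ (x < y)) stk by apply/hasP; exists l => //; rewrite -leqNgt ltnW.
    have := nth_find 0 Hhas; rewrite -/k -nth0 nth_drop addn0 => /negbTE ->; by [].
  + move=> _; exists (x :: drop k P), l, rest; split => //.
    * by rewrite mem_rcons inE Hlu orbT.
    * move=> y; rewrite mem_rcons inE => /orP [/eqP ->|]; [clear -Hxl; lia | exact: Hlmin].
    * rewrite pairwise_cons (pairwise_drop k HP) andbT; apply/allP => y /HD //.
    * move=> i; rewrite size_rcons ltnS leq_eqVlt => /orP [/eqP ->|Hi].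
      - rewrite nth_rc_last inE eqxx; split => // _; split; first exact: RLmin_last.
        by move=> E; move: Hlx; rewrite E eqxx.
      - rewrite (nth_rc x Hi) RLmin_rcons // inE.
        have Hne : nth 0 u i != x by apply/eqP => E; move: Hx; rewrite -E Hnthu.
        rewrite (negbTE Hne) /=; split.
        + move=> Hy; have := HPm i Hi; rewrite (mem_drop Hy) => /proj1 /(_ isT) [H1 H2].
          by split => //; split => //; apply: HD.
        + move=> [[H1 H2] H3].
          have HiP : nth 0 u i \in P by apply/HPm.
          move: HiP; rewrite -{1}(cat_take_drop k P) mem_cat => /orP [/HT H'|//]; clear -H' H2; lia.
-
  have Hall : all (fun y => x < y) stk.
    by apply/allP => y /Hstk /Hlmin; apply: leq_trans.
  rewrite /scstep /= Hall /=.
  split => /=.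
  + have := perm_step x Ha (_ : stk = [::] ++ stk); rewrite cats0; exact.
  + move=> i; rewrite size_rcons ltnS leq_eqVlt => /orP [/eqP ->|Hi].
    * rewrite nth_rc_last (negbTE Hxout); split => // /Ef_last //.
    * rewrite (nth_rc x Hi) Ef_rcons // -Hb //; split; first by left.
      move=> [//|[_ _ H]]; exfalso; apply: H => r Hr.
      apply: leq_trans Hxl _; apply: Hlmin; exact: Hnthu.
  + apply/andP; split.
    * apply/allP => y Hy; have Hyu := Hstk y Hy.
      by rewrite /= index_rcons_in // index_rcons_x // index_mem.
    * rewrite (eq_in_pairwise Hidx) //; apply/allP => y; exact: Hstk.
  + rewrite c231_cons negb_or Hd /=; apply/negP => /andP [_ /hasP [y /mem_behead Hy Hyx]].
    move/allP: Hall => /(_ y Hy) H'; clear -H' Hyx; lia.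
  + move=> _; exists [::], x, stk; split => //.
    * by rewrite mem_rcons inE eqxx.
    * move=> y; rewrite mem_rcons inE => /orP [/eqP ->//|/Hlmin H']; clear -H' Hxl; lia.
    * move=> i; rewrite size_rcons ltnS leq_eqVlt => /orP [/eqP ->|Hi].
      - by rewrite nth_rc_last; split => // [[_ []]].
      - rewrite (nth_rc x Hi) RLmin_rcons //; split => // [[[_ H] _]].
        have := Hlmin _ (Hnthu i Hi); clear -H Hxl; lia.
Qed.

Lemma scstate_inv u : uniq u -> SInv u (scstate u).
Proof.
elim/last_ind: u => [|u x IH].
- move=> _; rewrite /scstate /=; split => //; move=> i; rewrite ltn0 //.
- move=> Hux; have := Hux; rewrite rcons_uniq => /andP [_ Hu].
  rewrite /scstate foldl_rcons -/(scstate u).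
  move: (IH Hu); case: (scstate u) => stk out; exact: sinv_step.
Qed.

Notation "u .@[ i ]" := (nth 0 u i) (at level 2, format "u .@[ i ]").

Definition end1324 (u : seq nat) x := exists i j k,
  [/\ i < j < k, k < size u & (u.@[i] < u.@[k] < u.@[j]) && (u.@[j] < x)].
Definition MBe (u : seq nat) x i j k :=
  (forall r, i < r < j -> ~~ (u.@[r] < u.@[k])) /\ (forall r, j < r < k -> ~~ (u.@[k] < u.@[r] < x)).
Definition endmu (u : seq nat) x := exists i j k,
  [/\ i < j < k, k < size u, (u.@[k] < u.@[i] < x) && (x < u.@[j]) & MBe u x i j k].
Definition pat1324 (u : seq nat) := exists i j k l,
  [/\ i < j < k, k < l < size u & (u.@[i] < u.@[k] < u.@[j]) && (u.@[j] < u.@[l])].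
Definition patmu (u : seq nat) := exists i j k l,
  [/\ i < j < k, k < l < size u, (u.@[k] < u.@[i] < u.@[l]) && (u.@[l] < u.@[j]) & MBe u u.@[l] i j k].

Lemma nth_neq (u : seq nat) i j : uniq u -> i < size u -> j < size u -> i != j -> u.@[i] != u.@[j].
Proof. by move=> Hu Hi Hj Hij; rewrite nth_uniq. Qed.

Lemma nth_lt_neq (u : seq nat) i j : uniq u -> i < size u -> j < size u -> i != j ->
  ~~ (u.@[j] < u.@[i]) -> u.@[i] < u.@[j].
Proof.
move=> Hu Hi Hj Hij; rewrite -leqNgt leq_eqVlt => /orP [/eqP E|//].
by move: (nth_neq Hu Hi Hj Hij); rewrite E eqxx.
Qed.

Lemma first_ex (u : seq nat) p q : uniq u -> p < q -> q < size u -> u.@[q] < u.@[p] ->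
  exists q', firstsm u p q' /\ q' <= q.
Proof.
move=> Hu Hpq Hq Hv.
have ex : exists n, [&& p < n, n < size u & u.@[n] < u.@[p]] by exists q; rewrite Hpq Hq Hv.
case: (ex_minnP ex) => m /and3P [H1 H2 H3] Hmin.
exists m; split; last by apply: Hmin; rewrite Hpq Hq Hv.
split => // r /andP [Hr1 Hr2].
have Hrs : r < size u by clear -Hr2 H2; lia.
have Hps : p < size u by clear -H1 H2; lia.
apply: nth_lt_neq => //; first by clear -Hr1; apply/eqP; lia.
apply/negP => Hc; have := Hmin r; rewrite Hr1 Hrs Hc => /(_ isT); clear -Hr2; lia.
Qed.

Lemma firstsm_uniq (u : seq nat) p q q' : firstsm u p q -> firstsm u p q' -> q = q'.
Proof.
move=> [H1 H2 H3 H4] [H1' H2' H3' H4'].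
case: (ltngtP q q') => // H.
- have := H4' q; rewrite H1 H /= => /(_ isT); clear -H3; lia.
- have := H4 q'; rewrite H1' H /= => /(_ isT); clear -H3'; lia.
Qed.

Lemma LRminP (u : seq nat) q : reflect (LRmin u q) (all (fun r => u.@[q] < u.@[r]) (iota 0 q)).
Proof.
apply: (iffP allP) => H r Hr.
- by apply: H; rewrite mem_iota.
- by apply: H; move: Hr; rewrite mem_iota add0n => /andP [].
Qed.

Lemma RLminP (u : seq nat) p : reflect (RLmin u p) (all (fun r => u.@[p] < u.@[r]) (iota p.+1 (size u - p.+1))).
Proof.
apply: (iffP allP) => H r Hr.
- apply: H; rewrite mem_iota; move: Hr => /andP [H1 H2]; apply/andP; split => //; clear -H1 H2; lia.
- apply: H; move: Hr; rewrite mem_iota => /andP [H1 H2]; apply/andP; split => //; clear -H1 H2; lia.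
Qed.

Lemma notLRmin (u : seq nat) q : ~ LRmin u q -> exists r, r < q /\ ~~ (u.@[q] < u.@[r]).
Proof.
move=> HL; have : ~~ all (fun r => u.@[q] < u.@[r]) (iota 0 q) by apply/negP => /LRminP.
move=> /allPn [r Hr H]; exists r; split => //.
by move: Hr; rewrite mem_iota add0n => /andP [].
Qed.

Lemma notRLmin (u : seq nat) p : uniq u -> p < size u -> ~ RLmin u p ->
  exists r, [/\ p < r, r < size u & u.@[r] < u.@[p]].
Proof.
move=> Hu Hp HR; have : ~~ all (fun r => u.@[p] < u.@[r]) (iota p.+1 (size u - p.+1)) by apply/negP => /RLminP.
move=> /allPn [r Hr H]; exists r.
move: Hr; rewrite mem_iota => /andP [H1 H2].
have Hrs : r < size u by clear -H1 H2; lia.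
split => //.
apply: nth_lt_neq => //; first by apply/eqP; clear -H1; lia.
Qed.

Lemma LRmin_below (u : seq nat) i : exists m, [/\ m <= i, LRmin u m & u.@[m] <= u.@[i]].
Proof.
elim: i {-2}i (leqnn i) => [|n IH] i Hi.
- have -> : i = 0 by clear -Hi; lia.
  by exists 0; split => // r; rewrite ltn0.
- case: (boolP (all (fun r => u.@[i] < u.@[r]) (iota 0 i))) => [/LRminP H|H].
  + by exists i; split.
  + move/allPn: H => [r Hr Hv]; move: Hr; rewrite mem_iota add0n => /andP [_ Hr].
    have [m [H1 H2 H3]] := IH r (ltac:(clear -Hr Hi; lia)).
    exists m; split => //; first by clear -H1 Hr; lia.
    by apply: leq_trans H3 _; rewrite leqNgt.
Qed.

Lemma LRmin_notEf (u : seq nat) m : LRmin u m -> ~ Ef u m.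
Proof.
move=> HL [q [[H1 H2 H3 H4] HnL]]; apply: HnL => r Hr.
case: (ltngtP r m) => Hrm.
- have := HL r Hrm; clear -H3; lia.
- have := H4 r; rewrite Hrm Hr /= => /(_ isT); clear -H3; lia.
- by rewrite Hrm.
Qed.

Lemma C2_1324 (u : seq nat) x p : uniq u -> p < size u -> Ef u p -> u.@[p] < x -> end1324 u x.
Proof.
move=> Hu Hp [q [[H1 H2 H3 H4] HnL]] Hx.
have [r [Hrq Hr]] := notLRmin HnL.
have Hr' : u.@[r] < u.@[q].
  apply: nth_lt_neq => //; [clear -Hrq H2; lia | apply/eqP; clear -Hrq; lia].
have Hrp : r < p.
  case: (ltngtP r p) => // Hrp.
  - have := H4 r; rewrite Hrp Hrq /= => /(_ isT); clear -Hr' H3; lia.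
  - move: Hr'; rewrite Hrp; clear -H3; lia.
exists r, p, q; split.
- by rewrite Hrp H1.
- exact: H2.
- by rewrite Hr' H3 Hx.
Qed.

Lemma e1324_C2 (u : seq nat) x : uniq u -> end1324 u x -> ~ patmu u ->
  exists p, [/\ p < size u, Ef u p & u.@[p] < x].
Proof.
move=> Hu [i [j [k [/andP [Hij Hjk] Hk /andP [/andP [H1 H2] H3]]]]] Hmu.
have [q [[F1 F2 F3 F4] Hqk]] := first_ex Hu Hjk Hk H2.
have Hjs : j < size u by clear -Hjk Hk; lia.
case: (boolP (all (fun r => u.@[q] < u.@[r]) (iota 0 q))) => [/LRminP HL|HnL].
- exfalso; apply: Hmu.
  have Hqi : u.@[q] < u.@[i] by apply: HL; clear -Hij F1; lia.
  have Hqk' : q < k.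
    rewrite ltn_neqAle Hqk andbT; apply/eqP => E; move: Hqi; rewrite E; clear -H1; lia.
  exists i, j, q, k; split.
  + by rewrite Hij F1.
  + by rewrite Hqk' Hk.
  + by rewrite Hqi H1 H2.
  + split.
    * move=> r /andP [Hr1 Hr2]; have := HL r (ltac:(clear -Hr2 F1; lia)); clear -F3; lia.
    * move=> r /andP [Hr1 Hr2]; have := F4 r; rewrite Hr1 Hr2 => /(_ isT); clear -H2; lia.
- exists j; split => //; exists q; split; first by split.
  by move=> /LRminP; apply/negP.
Qed.

Lemma C3_mu (u : seq nat) x p pc : uniq u -> pc < p -> p < size u -> ~ Ef u p -> ~ RLmin u p ->
  u.@[pc] < x -> x < u.@[p] -> endmu u x.
Proof.
move=> Hu Hpc Hp HnE HnR H1 H2.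
have [r [Hr1 Hr2 Hr3]] := notRLmin Hu Hp HnR.
have [q [[F1 F2 F3 F4] _]] := first_ex Hu Hr1 Hr2 Hr3.
have HL : LRmin u q.
  case: (boolP (all (fun r => u.@[q] < u.@[r]) (iota 0 q))) => [/LRminP //|HnL].
  exfalso; apply: HnE; exists q; split; first by split.
  by move=> /LRminP; apply/negP.
exists pc, p, q; split.
- by rewrite Hpc F1.
- exact: F2.
- have := HL pc (ltac:(clear -Hpc F1; lia)) => Hq; by rewrite Hq H1 H2.
- split.
  + move=> r' /andP [_ Hr']; have := HL r' (ltac:(clear -Hr' F1; lia)); clear; lia.
  + move=> r' /andP [Hr'1 Hr'2]; have := F4 r'; rewrite Hr'1 Hr'2 => /(_ isT); clear -H2; lia.
Qed.

Lemma r_before_i (u : seq nat) i j k q r : firstsm u j q ->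
  (forall r, i < r < j -> ~~ (u.@[r] < u.@[k])) -> i < j -> r < q -> u.@[r] < u.@[q] ->
  u.@[q] <= u.@[k] -> u.@[k] < u.@[i] -> r < i.
Proof.
move=> [F1 F2 F3 F4] B1 Hij Hrq Hr Hqk Hki.
case: (ltngtP r i) => // Hri.
- case: (ltngtP r j) => Hrj.
  + have := B1 r; rewrite Hri Hrj => /(_ isT); clear -Hr Hqk; lia.
  + have := F4 r; rewrite Hrj Hrq => /(_ isT); clear -Hr F3; lia.
  + move: Hr; rewrite Hrj; clear -F3; lia.
- move: Hr; rewrite Hri; clear -Hqk Hki; lia.
Qed.

Lemma mu_C (u : seq nat) x : uniq u -> x \notin u -> endmu u x -> ~ patmu u ->
  (exists p, [/\ p < size u, Ef u p & u.@[p] < x]) \/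
  (exists j m, [/\ m < j < size u, ~ Ef u j, ~ RLmin u j, LRmin u m & (u.@[m] < x) && (x < u.@[j])]).
Proof.
move=> Hu Hx [i [j [k [Hijk Hk Hv HB]]]] Hmu.
move: {2}(k - j) (leqnn (k - j)) => n; elim: n i j Hijk Hv HB => [|n IH] i j /andP [Hij Hjk] /andP [/andP [H1 H2] H3] [B1 B2] Hn.
- exfalso; clear -Hn Hjk; lia.
have Hjs : j < size u by clear -Hjk Hk; lia.
have Hv' : u.@[k] < u.@[j] by clear -H1 H2 H3; lia.
have [q [[F1 F2 F3 F4] Hqk]] := first_ex Hu Hjk Hk Hv'.
case: (boolP (all (fun r => u.@[q] < u.@[r]) (iota 0 q))) => [/LRminP HL|HnL].
- right.
  have [m [Hm1 Hm2 Hm3]] := LRmin_below u i.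
  exists j, m; split => //.
  + by rewrite Hjs andbT; clear -Hm1 Hij; lia.
  + move=> [q' [Hf HnL']]; have E := firstsm_uniq Hf (And4 F1 F2 F3 F4).
    by apply: HnL'; rewrite E.
  + move=> HR; have := HR q; rewrite F1 F2 => /(_ isT); clear -F3; lia.
  + by rewrite H3 andbT; clear -Hm3 H2; lia.
- have HnL' : ~ LRmin u q by move=> /LRminP; apply/negP.
  have [r [Hrq Hr]] := notLRmin HnL'.
  have Hr' : u.@[r] < u.@[q].
    apply: nth_lt_neq => //; [clear -Hrq F2; lia | apply/eqP; clear -Hrq; lia].
  have Hqne : q != k -> u.@[q] != u.@[k] by move=> H; apply: nth_neq.
  case: (ltngtP q k) => Hqk'; last first.
  +
    subst q; left; apply: (e1324_C2 Hu) => //.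
    have Hri := r_before_i (And4 F1 F2 F3 F4) B1 Hij Hrq Hr' (leqnn _) H1.
    exists r, i, k; split.
    * rewrite Hri /=; clear -Hij Hjk; lia.
    * exact: Hk.
    * by rewrite Hr' H1 H2.
  + clear -Hqk' Hqk; lia.
  + case: (ltngtP u.@[q] u.@[k]) => Hqkv.
    * left; apply: (e1324_C2 Hu) => //.
      have Hri := r_before_i (And4 F1 F2 F3 F4) B1 Hij Hrq Hr' (ltnW Hqkv) H1.
      exists r, i, k; split.
      - rewrite Hri /=; clear -Hij Hjk; lia.
      - exact: Hk.
      - rewrite H1 H2 andbT; clear -Hr' Hqkv; lia.
    * have Hxq : x < u.@[q].
        have := B2 q; rewrite F1 Hqk' => /(_ isT); rewrite Hqkv /= -leqNgt leq_eqVlt => /orP [/eqP E|//].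
        by move: Hx; rewrite E mem_nth.
      apply: (IH i q) => //.
      - by rewrite Hqk' andbT; clear -Hij F1; lia.
      - by rewrite H1 H2 Hxq.
      - split.
        + move=> r' /andP [Hr'1 Hr'2].
          case: (ltngtP r' j) => Hr'j.
          * apply: B1; by rewrite Hr'1 Hr'j.
          * have := F4 r'; rewrite Hr'j Hr'2 => /(_ isT); clear -Hv'; lia.
          * rewrite Hr'j; clear -Hv'; lia.
        + move=> r' /andP [Hr'1 Hr'2]; apply: B2; rewrite Hr'2 andbT; clear -Hr'1 F1; lia.
      - clear -Hn F1 Hqk'; lia.
    * by move: (Hqne (ltac:(apply/eqP; clear -Hqk'; lia))); rewrite Hqkv eqxx.
Qed.

Section Ins.
Variables (O R : seq nat) (x : nat).
Hypothesis HU : uniq (O ++ x :: R).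

Lemma xnO : x \notin O.
Proof. move: HU; rewrite cat_uniq => /and3P [_ /hasPn H _]; apply/negP => Hx; move: (H x); rewrite inE eqxx => /(_ isT); by rewrite Hx. Qed.

Lemma xnR : x \notin R.
Proof. by move: HU; rewrite cat_uniq => /and3P [_ _ /= /andP []]. Qed.

Lemma RnO y : y \in R -> y \notin O.
Proof. move=> Hy; move: HU; rewrite cat_uniq => /and3P [_ /hasPn H _]; apply: H; by rewrite inE Hy orbT. Qed.

Lemma idxL_O y : y \in O -> index y (O ++ x :: R) = index y O.
Proof. by move=> Hy; rewrite index_cat Hy. Qed.
Lemma idxM_O y : y \in O -> index y (O ++ R) = index y O.
Proof. by move=> Hy; rewrite index_cat Hy. Qed.
Lemma idxL_x : index x (O ++ x :: R) = size O.
Proof. by rewrite index_cat (negbTE xnO) /= eqxx addn0. Qed.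
Lemma idxL_R y : y \in R -> index y (O ++ x :: R) = size O + (index y R).+1.
Proof.
move=> Hy; rewrite index_cat (negbTE (RnO Hy)) /=.
have -> : (x == y) = false by apply/eqP => E; move: xnR; rewrite E Hy.
by [].
Qed.
Lemma idxM_R y : y \in R -> index y (O ++ R) = size O + index y R.
Proof. by move=> Hy; rewrite index_cat (negbTE (RnO Hy)). Qed.

Lemma memL y : y \in O ++ x :: R -> [\/ y \in O, y = x | y \in R].
Proof. rewrite mem_cat inE => /orP [->|/orP [/eqP ->|->]]; by [constructor 1|constructor 2|constructor 3]. Qed.

Lemma idxO_lt y : y \in O -> index y O < size O.
Proof. by rewrite index_mem. Qed.

Definition C1 := exists a b, [/\ a \in O, b \in O, index a O < index b O & (x < a) && (a < b)].
Definition C2 := exists a c, [/\ a \in O, c \in R & (c < a) && (a < x)].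
Definition C3 := exists b c, [/\ b \in R, c \in R, index b R < index c R & (c < x) && (x < b)].

Lemma memM y : y \in O ++ R -> y \in O \/ y \in R.
Proof. by rewrite mem_cat => /orP [] ->; [left|right]. Qed.

Lemma idx_mono a b : a \in O ++ R -> b \in O ++ R ->
  (index a (O ++ x :: R) < index b (O ++ x :: R)) = (index a (O ++ R) < index b (O ++ R)).
Proof.
move=> Ha Hb.
case: (memM Ha) => Ha'; case: (memM Hb) => Hb'.
- by rewrite (idxL_O Ha') (idxL_O Hb') (idxM_O Ha') (idxM_O Hb').
- rewrite (idxL_O Ha') (idxM_O Ha') (idxL_R Hb') (idxM_R Hb'); move: (idxO_lt Ha') => H.
  apply/idP/idP => _; clear -H; lia.
- rewrite (idxL_O Hb') (idxM_O Hb') (idxL_R Ha') (idxM_R Ha'); move: (idxO_lt Hb') => H.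
  apply/idP/idP => H'; exfalso; clear -H H'; lia.
- rewrite (idxL_R Ha') (idxM_R Ha') (idxL_R Hb') (idxM_R Hb'); apply/idP/idP => H; clear -H; lia.
Qed.

Lemma cls y : y \in O ++ x :: R ->
  [\/ y \in O /\ index y (O ++ x :: R) < size O,
      y = x /\ index y (O ++ x :: R) = size O |
      y \in R /\ size O < index y (O ++ x :: R)].
Proof.
case/memL => H.
- constructor 1; split => //; rewrite idxL_O //; exact: idxO_lt.
- constructor 2; split => //; rewrite H; exact: idxL_x.
- constructor 3; split => //; rewrite idxL_R //; clear; lia.
Qed.

Lemma inM_O y : y \in O -> y \in O ++ R.
Proof. by rewrite mem_cat => ->. Qed.
Lemma inM_R y : y \in R -> y \in O ++ R.
Proof. by rewrite mem_cat => ->; rewrite orbT. Qed.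
Lemma inL_O y : y \in O -> y \in O ++ x :: R.
Proof. by rewrite mem_cat => ->. Qed.
Lemma inL_R y : y \in R -> y \in O ++ x :: R.
Proof. by rewrite mem_cat inE => ->; rewrite !orbT. Qed.
Lemma inL_x : x \in O ++ x :: R.
Proof. by rewrite mem_cat inE eqxx orbT. Qed.

Lemma has231_ins : has231 (O ++ x :: R) <-> [\/ has231 (O ++ R), C1, C2 | C3].
Proof.
split.
- move=> [a [b [c [Ha Hb Hc /and4P [H1 H2 H3 H4]]]]].
  have HM : forall y, y \in O \/ y \in R -> y \in O ++ R.
    by move=> y [] Hy; [apply: inM_O|apply: inM_R].
  have Tr : a \in O ++ R -> b \in O ++ R -> c \in O ++ R -> has231 (O ++ R).
    move=> Ha' Hb' Hc'; exists a, b, c; split => //.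
    by rewrite -!idx_mono // H1 H2 H3 H4.
  case: (cls Hc) => [[HcO Hc1]|[Ecx Hc1]|[HcR Hc1]].
  + constructor 1; apply: Tr => //; apply: HM.
    * case: (cls Ha) => [[? _]|[_ E]|[_ E]]; [by left|exfalso; clear -E H1 H2 Hc1; lia|exfalso; clear -E H1 H2 Hc1; lia].
    * case: (cls Hb) => [[? _]|[_ E]|[_ E]]; [by left|exfalso; clear -E H1 H2 Hc1; lia|exfalso; clear -E H1 H2 Hc1; lia].
    * by left.
  + subst c; constructor 2.
    have HaO : a \in O by case: (cls Ha) => [[? _]|[_ E]|[_ E]] //; exfalso; clear -E H1 H2 Hc1; lia.
    have HbO : b \in O by case: (cls Hb) => [[? _]|[_ E]|[_ E]] //; exfalso; clear -E H1 H2 Hc1; lia.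
    exists a, b; split => //; first by rewrite -(idxL_O HaO) -(idxL_O HbO).
    by rewrite H3 H4.
  + case: (cls Hb) => [[HbO Hb1]|[Ebx Hb1]|[HbR Hb1]].
    * constructor 1; apply: Tr => //; apply: HM; last by right.
      - case: (cls Ha) => [[? _]|[_ E]|[_ E]]; [by left|exfalso; clear -E H1 Hb1; lia|exfalso; clear -E H1 Hb1; lia].
      - by left.
    * subst b; constructor 3.
      have HaO : a \in O by case: (cls Ha) => [[? _]|[_ E]|[_ E]] //; exfalso; clear -E H1 Hb1; lia.
      exists a, c; split => //; by rewrite H3 H4.
    * case: (cls Ha) => [[HaO Ha1]|[Eax Ha1]|[HaR Ha1]].
      - constructor 1; apply: Tr => //; apply: HM; by [left|right|right].
      - subst a; constructor 4; exists b, c; split => //.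
        + by move: H2; rewrite !idxL_R // ltn_add2l ltnS.
        + by rewrite H3 H4.
      - constructor 1; apply: Tr => //; apply: HM; by right.
- have inLM : forall y, y \in O ++ R -> y \in O ++ x :: R.
    by move=> y /memM [/inL_O|/inL_R].
  case.
  + move=> [a [b [c [Ha Hb Hc /and4P [H1 H2 H3 H4]]]]].
    exists a, b, c; split; try by apply: inLM.
    by rewrite !idx_mono // H1 H2 H3 H4.
  + move=> [a [b [Ha Hb Hab /andP [H3 H4]]]].
    exists a, b, x; split; try by apply: inL_O. exact: inL_x.
    rewrite (idxL_O Ha) (idxL_O Hb) idxL_x Hab H3 H4 /= andbT; exact: idxO_lt.
  + move=> [a [c [Ha Hc /andP [H3 H4]]]].
    exists a, x, c; split; [exact: inL_O|exact: inL_x|exact: inL_R|].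
    rewrite (idxL_O Ha) (idxL_R Hc) idxL_x H3 H4 idxO_lt //=; clear; lia.
  + move=> [b [c [Hb Hc Hbc /andP [H3 H4]]]].
    exists x, b, c; split; [exact: inL_x|exact: inL_R|exact: inL_R|].
    rewrite (idxL_R Hb) (idxL_R Hc) idxL_x H3 H4 /= andbT; apply/andP; split; clear -Hbc; lia.
Qed.
End Ins.

Lemma MBe_rcons (u : seq nat) x v i j k : j < k -> k < size u -> MBe (rcons u x) v i j k <-> MBe u v i j k.
Proof.
move=> Hjk Hk; rewrite /MBe (nth_rc x Hk); split => [[B1 B2]|[B1 B2]]; split.
- move=> r Hr; have Hrs : r < size u by clear -Hr Hk Hjk; case/andP: Hr => *; lia.
  by rewrite -(nth_rc x Hrs); apply: B1.
- move=> r Hr; have Hrs : r < size u by clear -Hr Hk Hjk; case/andP: Hr => *; lia.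
  by rewrite -(nth_rc x Hrs); apply: B2.
- move=> r Hr; have Hrs : r < size u by clear -Hr Hk Hjk; case/andP: Hr => *; lia.
  by rewrite (nth_rc x Hrs); apply: B1.
- move=> r Hr; have Hrs : r < size u by clear -Hr Hk Hjk; case/andP: Hr => *; lia.
  by rewrite (nth_rc x Hrs); apply: B2.
Qed.

Lemma pat1324_rcons (u : seq nat) x : pat1324 (rcons u x) <-> pat1324 u \/ end1324 u x.
Proof.
split.
- move=> [i [j [k [l [/andP [Hij Hjk] /andP [Hkl Hl] Hv]]]]].
  rewrite size_rcons ltnS leq_eqVlt in Hl; case/orP: Hl => [/eqP El|Hl].
  + subst l; right; exists i, j, k; split => //; first by rewrite Hij Hjk.
    have Hks : k < size u by [].
    move: Hv; rewrite nth_rc_last !nth_rc //; clear -Hij Hjk Hks; lia.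
  + left; exists i, j, k, l; split => //; [by rewrite Hij Hjk|by rewrite Hkl Hl|].
    move: Hv; rewrite !nth_rc //; clear -Hij Hjk Hkl Hl; lia.
- move=> [[i [j [k [l [/andP [Hij Hjk] /andP [Hkl Hl] Hv]]]]]|[i [j [k [/andP [Hij Hjk] Hk Hv]]]]].
  + exists i, j, k, l; split => //; [by rewrite Hij Hjk|by rewrite Hkl size_rcons ltnS ltnW|].
    rewrite !nth_rc //; clear -Hij Hjk Hkl Hl; lia.
  + exists i, j, k, (size u); split => //; [by rewrite Hij Hjk|by rewrite Hk size_rcons ltnSn|].
    rewrite nth_rc_last !nth_rc //; clear -Hij Hjk Hk; lia.
Qed.

Lemma patmu_rcons (u : seq nat) x : patmu (rcons u x) <-> patmu u \/ endmu u x.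
Proof.
split.
- move=> [i [j [k [l [/andP [Hij Hjk] /andP [Hkl Hl] Hv HB]]]]].
  rewrite size_rcons ltnS leq_eqVlt in Hl; case/orP: Hl => [/eqP El|Hl].
  + subst l; right; exists i, j, k; split => //; first by rewrite Hij Hjk.
    * move: Hv; rewrite nth_rc_last !nth_rc //; clear -Hij Hjk Hkl; lia.
    * by move: HB; rewrite nth_rc_last MBe_rcons.
  + left; exists i, j, k, l; split => //; [by rewrite Hij Hjk|by rewrite Hkl Hl| |].
    * move: Hv; rewrite !nth_rc //; clear -Hij Hjk Hkl Hl; lia.
    * have Hks : k < size u by clear -Hkl Hl; lia.
      by move: HB; rewrite MBe_rcons // nth_rc.
- move=> [[i [j [k [l [/andP [Hij Hjk] /andP [Hkl Hl] Hv HB]]]]]|[i [j [k [/andP [Hij Hjk] Hk Hv HB]]]]].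
  + have Hks : k < size u by clear -Hkl Hl; lia.
    exists i, j, k, l; split => //; [by rewrite Hij Hjk|by rewrite Hkl size_rcons ltnS ltnW| |].
    * rewrite !nth_rc //; clear -Hij Hjk Hkl Hl; lia.
    * by rewrite MBe_rcons // nth_rc.
  + exists i, j, k, (size u); split => //; [by rewrite Hij Hjk|by rewrite Hk size_rcons ltnSn| |].
    * rewrite nth_rc_last !nth_rc //; clear -Hij Hjk Hk; lia.
    * by rewrite nth_rc_last MBe_rcons.
Qed.

Definition JM (u : seq nat) x := exists j m, [/\ m < j < size u, ~ Ef u j, ~ RLmin u j, LRmin u m &
  (u.@[m] < x) && (x < u.@[j])].
Definition EP (u : seq nat) x := exists p, [/\ p < size u, Ef u p & u.@[p] < x].

Lemma step_equiv (u : seq nat) x O R : uniq (rcons u x) ->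
  (has231 (O ++ R) <-> pat1324 u \/ patmu u) ->
  (C1 O x -> has231 (O ++ R)) ->
  (C2 O R x -> end1324 u x) ->
  (C3 R x -> endmu u x) ->
  (EP u x -> C2 O R x) ->
  (JM u x -> C3 R x) ->
  uniq (O ++ x :: R) ->
  (has231 (O ++ x :: R) <-> pat1324 (rcons u x) \/ patmu (rcons u x)).
Proof.
move=> Hux IH H1 H2 H3 H4 H5 HU.
have := Hux; rewrite rcons_uniq => /andP [Hx Hu].
rewrite has231_ins // pat1324_rcons patmu_rcons; split.
- case => [/IH [H|H]|/H1 /IH [H|H]|/H2 H|/H3 H]; tauto.
- have Hmu : patmu u -> [\/ has231 (O ++ R), C1 O x, C2 O R x | C3 R x] by move=> H; constructor 1; apply/IH; right.
  case: (classic (patmu u)) => [/Hmu //|Hnmu].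
  move=> [[H|H]|[H|H]].
  + by constructor 1; apply/IH; left.
  + by constructor 3; apply: H4; apply: e1324_C2.
  + by apply: Hmu.
  + case: (mu_C Hu Hx H Hnmu) => [H'|H'].
    * by constructor 3; apply: H4.
    * by constructor 4; apply: H5.
Qed.

Lemma has231_single x : ~ has231 [:: x].
Proof.
move=> [a [b [c [Ha Hb Hc /and4P [H1 H2 _ _]]]]].
move: Ha Hb H1; rewrite !inE => /eqP -> /eqP ->; by rewrite ltnn.
Qed.

Lemma pat_single x : ~ (pat1324 [:: x] \/ patmu [:: x]).
Proof.
by move=> [[i [j [k [l [/andP [Hij Hjk] /andP [Hkl Hl] _]]]]]|[i [j [k [l [/andP [Hij Hjk] /andP [Hkl Hl] _ _]]]]]];
  move: Hl => /=; clear -Hij Hjk Hkl; lia.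
Qed.

Lemma idx_nth (u : seq nat) y : y \in u -> u.@[index y u] = y.
Proof. exact: nth_index. Qed.

Lemma main_equiv u : uniq u -> (has231 ((scstate u).2 ++ (scstate u).1) <-> pat1324 u \/ patmu u).
Proof.
elim/last_ind: u => [|u x IH].
- move=> _; rewrite /scstate /=; split.
  + by move=> [a [b [c [Ha _ _ _]]]].
  + by move=> [[i [j [k [l [_ /andP [_ Hl] _]]]]]|[i [j [k [l [_ /andP [_ Hl] _ _]]]]]].
move=> Hux; have := Hux; rewrite rcons_uniq => /andP [Hx Hu].
move: (IH Hu) (scstate_inv Hu).
rewrite /scstate foldl_rcons -/(scstate u).
case: (scstate u) => stk out /= IH' [Ha Hb Hc Hd He]; simpl in Ha, Hb, Hc, Hd, He.
have Hsub : forall y, y \in out ++ stk -> y \in u by move=> y; rewrite (perm_mem Ha).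
have Hstk : forall y, y \in stk -> y \in u by move=> y Hy; apply: Hsub; rewrite mem_cat Hy orbT.
have Hout : forall y, y \in out -> y \in u by move=> y Hy; apply: Hsub; rewrite mem_cat Hy.
have Huo : uniq (out ++ stk) by rewrite (perm_uniq Ha).
have Hus : uniq stk by move: Huo; rewrite cat_uniq => /and3P [].
have Hdisj : forall y, y \in stk -> y \notin out.
  by move=> y Hy; move: Huo; rewrite cat_uniq => /and3P [_ /hasPn H _]; apply: H.
have [Hu0|Hun] := eqVneq u [::].
- subst u; move: (perm_size Ha); rewrite size_cat /= => Hs0.
  have Es : stk = [::] by apply: size0nil; clear -Hs0; lia.
  have Eo : out = [::] by apply: size0nil; clear -Hs0; lia.
  rewrite Es Eo /scstep /=; split => [/has231_single|/pat_single] //.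
have [P [l [rest [Estk Hlu Hlmin HP HPm]]]] := He (elimN eqP Hun).
have Hls : l \in stk by rewrite Estk mem_cat inE eqxx orbT.
have Hlo : l \notin out by apply: Hdisj.
have Hnthu : forall i, i < size u -> u.@[i] \in u by move=> i Hi; apply: mem_nth.
have Hlx : l != x by apply/eqP => E; move: Hx; rewrite -E Hlu.
have Hidx : forall y, y \in u -> index y u < size u by move=> y; rewrite index_mem.
case: (ltngtP x l) => Hxl; last first.
- by move: Hlx; rewrite Hxl eqxx.
- have Hall : all (fun y => x < y) stk = false.
    by apply/negbTE/allPn; exists l => //; rewrite -leqNgt ltnW.
  rewrite /scstep /= Hall /=.
  set k := find (fun y => ~~ (x < y)) stk.
  have Hk : k = find (fun y => ~~ (x < y)) P by rewrite /k Estk find_stk // -leqNgt ltnW.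
  have HkP : k <= size P by rewrite Hk find_size.
  have Htake : take k stk = take k P by rewrite Estk take_catl.
  have Hdrop : drop k stk = drop k P ++ l :: rest by rewrite Estk drop_catl.
  have HPu : forall y, y \in P -> y \in u by move=> y Hy; apply: Hstk; rewrite Estk mem_cat Hy.
  have HT : forall y, y \in take k P -> x < y.
    by move=> y; rewrite Hk => /mem_take_find; rewrite negbK.
  have HD : forall y, y \in drop k P -> y < x.
    move=> y Hy; have := @drop_find_le x P HP; rewrite -Hk => /(_ y Hy).
    rewrite leq_eqVlt => /orP [/eqP E|//]; exfalso.
    by move: Hx; rewrite -E (HPu y (mem_drop Hy)).
  rewrite Htake Hdrop.
  have EOR : (out ++ take k P) ++ drop k P ++ l :: rest = out ++ stk.
    by rewrite -catA; congr (_ ++ _); rewrite catA cat_take_drop Estk.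
  have Hperm : perm_eq ((out ++ take k P) ++ x :: (drop k P ++ l :: rest)) (rcons u x).
    by apply: perm_step Ha _; rewrite Estk -{1}(cat_take_drop k P) catA.
  have HU : uniq ((out ++ take k P) ++ x :: (drop k P ++ l :: rest)) by rewrite (perm_uniq Hperm).
  have HlR : l \in drop k P ++ l :: rest by rewrite mem_cat inE eqxx orbT.
  have HlO : l \notin out ++ take k P by apply: (RnO HU).
  have HsR : forall y, y \in drop k P ++ l :: rest -> y \in stk.
    by move=> y; rewrite -Hdrop => /mem_drop.
  apply: step_equiv => //.
  + by rewrite EOR.
  + move=> [a [b [Ha' Hb' Hab /andP [H3 H4]]]].
    exists a, b, l; split; [by rewrite mem_cat Ha'|by rewrite mem_cat Hb'|by rewrite mem_cat HlR orbT|].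
    rewrite (index_cat_l _ Ha') (index_cat_l _ Hb') (index_cat_r _ HlO) Hab H4 /=.
    have Hbo : index b (out ++ take k P) < size (out ++ take k P) by rewrite index_mem.
    rewrite (ltn_addr _ Hbo) /= andbT; exact: ltn_trans Hxl H3.
  + move=> [a [c [Ha' Hc' /andP [H3 H4]]]].
    have HaO : a \in out.
      move: Ha'; rewrite mem_cat => /orP [//|/HT H]; exfalso.
      have := ltn_trans H H4; by rewrite ltnn.
    have Hau := Hout a HaO.
    apply: (@C2_1324 u x (index a u)) => //; first exact: Hidx.
    * by apply/Hb; [exact: Hidx | rewrite idx_nth].
    * by rewrite idx_nth.
  + move=> [b [c [Hb' Hc' Hbc /andP [H3 H4]]]].
    have Hbs := HsR b Hb'; have Hcs := HsR c Hc'.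
    have HbD : b \notin drop k P.
      apply/negP => /HD H; have := ltn_trans H H4; by rewrite ltnn.
    have Hbl : b != l by apply/eqP => E; move: H4; rewrite E => H; have := ltn_trans H Hxl; by rewrite ltnn.
    have Hbr : b \in rest by move: Hb'; rewrite mem_cat (negbTE HbD) /= inE (negbTE Hbl).
    move: Hbc; rewrite -Hdrop index_drop_lt ?Hdrop // => Hbc.
    have Hcb := pairwise_idx Hc Hbs Hcs Hbc; simpl in Hcb.
    have Hbu := Hstk b Hbs; have Hcu := Hstk c Hcs.
    apply: (@C3_mu u x (index b u) (index c u)) => //; [exact: Hidx| | |by rewrite idx_nth|by rewrite idx_nth].
    * move=> HE; have : u.@[index b u] \in out by apply/Hb => //; exact: Hidx.
      rewrite idx_nth // => Hbo; move: (Hdisj b Hbs); by rewrite Hbo.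
    * move=> HR; have : u.@[index b u] \in P.
        apply/HPm; [exact: Hidx|split => //]; rewrite idx_nth //; apply/eqP; exact: Hbl.
      rewrite idx_nth // => HbP.
      move: Hus; rewrite Estk cat_uniq => /and3P [_ /hasPn /(_ b) H _].
      by move: H; rewrite inE Hbr orbT HbP => /(_ isT).
  + move=> [p [Hp HE Hpx]].
    have Hpo : u.@[p] \in out by apply/Hb.
    exists u.@[p], l; split; [by rewrite mem_cat Hpo|exact: HlR|].
    rewrite Hpx andbT ltn_neqAle Hlmin ?Hnthu // andbT.
    by apply/eqP => E; move: Hlo; rewrite E Hpo.
  + move=> [j [m [/andP [Hmj Hj] HnE HnR HLm /andP [H3 H4]]]].
    have Hms : m < size u by exact: ltn_trans Hmj Hj.
    have Hjs : u.@[j] \in stk.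
      have : u.@[j] \in out ++ stk by rewrite (perm_mem Ha) Hnthu.
      rewrite mem_cat => /orP [/(Hb j Hj) //|//].
    have Hms' : u.@[m] \in stk.
      have : u.@[m] \in out ++ stk by rewrite (perm_mem Ha) Hnthu.
      rewrite mem_cat => /orP [/(Hb m Hms) H|//]; exfalso; exact: (LRmin_notEf HLm).
    have HjR : u.@[j] \in drop k stk.
      move: Hjs; rewrite -{1}(cat_take_drop k stk) mem_cat Htake => /orP [H|//]; exfalso.
      by have := (proj1 (HPm j Hj) (mem_take H)) => [[]].
    have HmR : u.@[m] \in drop k stk.
      move: Hms'; rewrite -{1}(cat_take_drop k stk) mem_cat Htake => /orP [/HT H|//]; exfalso.
      have := ltn_trans H3 H; by rewrite ltnn.
    exists u.@[j], u.@[m]; split; [by rewrite -Hdrop|by rewrite -Hdrop| |by rewrite H3 H4].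
    rewrite -Hdrop index_drop_lt //.
    case: (ltngtP (index u.@[j] stk) (index u.@[m] stk)) => // Hlt; exfalso.
    * have := pairwise_idx Hc Hms' Hjs Hlt; rewrite /= !index_uniq //; clear -Hmj; lia.
    * have E : u.@[j] = u.@[m] by rewrite -(nth_index 0 Hjs) Hlt nth_index.
      by move: E => /eqP; rewrite nth_uniq // => /eqP E; move: Hmj; rewrite E ltnn.
-
  have Hall : all (fun y => x < y) stk.
    by apply/allP => y /Hstk /Hlmin; apply: leq_trans.
  rewrite /scstep /= Hall /=.
  have Hperm : perm_eq (out ++ x :: stk) (rcons u x).
    have := perm_step x Ha (_ : stk = [::] ++ stk); rewrite cats0; exact.
  apply: step_equiv => //.
  + move=> [a [b [Ha' Hb' Hab /andP [H3 H4]]]].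
    exists a, b, l; split; [by rewrite mem_cat Ha'|by rewrite mem_cat Hb'|by rewrite mem_cat Hls orbT|].
    rewrite (index_cat_l stk Ha') (index_cat_l stk Hb') (index_cat_r stk Hlo) Hab.
    have Hbo : index b out < size out by rewrite index_mem.
    have Hla : l < a.
      rewrite ltn_neqAle Hlmin ?Hout // andbT; apply/eqP => E; move: Hlo; by rewrite E Ha'.
    rewrite Hla H4 /= andbT; clear -Hbo; lia.
  + move=> [a [c [Ha' Hc' /andP [H3 H4]]]]; exfalso.
    have := Hlmin a (Hout a Ha'); clear -H4 Hxl; lia.
  + move=> [b [c [Hb' Hc' _ /andP [H3 H4]]]]; exfalso.
    have := Hlmin c (Hstk c Hc'); clear -H3 Hxl; lia.
  + move=> [p [Hp _ Hpx]]; exfalso.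
    have := leq_ltn_trans (Hlmin _ (Hnthu p Hp)) (ltn_trans Hpx Hxl); by rewrite ltnn.
  + move=> [j [m [/andP [Hmj Hj] _ _ _ /andP [H3 _]]]]; exfalso.
    have Hms : m < size u by exact: ltn_trans Hmj Hj.
    have := leq_ltn_trans (Hlmin _ (Hnthu m Hms)) (ltn_trans H3 Hxl); by rewrite ltnn.
  + by rewrite (perm_uniq Hperm).
Qed.

Lemma foldl_sc_eq u : uniq u ->
  foldl (fun p x => sc_insert (fun s => ~~ contains_23_1 s) x p.1 p.2) ([::], [::]) u = scstate u.
Proof.
elim/last_ind: u => [|u x IH] // Hux.
have := Hux; rewrite rcons_uniq => /andP [Hx Hu].
have -> : scstate (rcons u x) = scstep (scstate u) x by rewrite /scstate foldl_rcons.
rewrite foldl_rcons IH //.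
move: (scstate_inv Hu); case: (scstate u) => stk out [Ha _ _ Hd _] /=.
apply: sc_insert_eq => //; apply/negP => Hs; move: Hx; by rewrite -(perm_mem Ha) mem_cat Hs orbT.
Qed.

Lemma SC_eq t : uniq t -> SC_23_1 t = (scstate t).2 ++ (scstate t).1.
Proof. by move=> Ht; rewrite /SC_23_1 /SC sc_loop_foldl foldl_sc_eq. Qed.

Lemma foldl_w_eq u : uniq u ->
  foldl (fun p x => sc_insert (fun s => ~~ contains_cl [:: 2; 1] s) x p.1 p.2) ([::], [::]) u = wstate u.
Proof.
elim/last_ind: u => [|u x IH] // Hux.
have := Hux; rewrite rcons_uniq => /andP [Hx Hu].
have -> : wstate (rcons u x) = wstep (wstate u) x by rewrite /wstate foldl_rcons.
rewrite foldl_rcons IH //.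
move: (wstate_inv Hu); case: (wstate u) => stk out [_ _ Hp] /=.
exact: w_insert_eq.
Qed.

Lemma W_eq w : uniq w -> west_s w = (wstate w).2 ++ (wstate w).1.
Proof. by move=> Hw; rewrite /west_s /SC sc_loop_foldl foldl_w_eq. Qed.

Lemma MB_equiv (t : seq nat) i j k l : uniq t -> (forall r, r < size t -> 0 < t.@[r]) ->
  i < j -> j < k -> k < size t -> t.@[k] < t.@[i] -> t.@[i] < t.@[l] ->
  (MB t i j k l <-> MBe t t.@[l] i j k).
Proof.
move=> Hu Hpos Hij Hjk Hk Hki Hil; rewrite /MB /MBe; split => [[B1 B2]|[B1 B2]]; split.
- move=> r Hr; have Hrs : r < size t by case/andP: Hr => _ H; exact: ltn_trans H (ltn_trans Hjk Hk).
  have := B1 r Hr; by rewrite Hpos.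
- move=> r Hr; have Hrs : r < size t by case/andP: Hr => _ H; exact: ltn_trans H Hk.
  have Hri : r != i.
    case/andP: Hr => H _; apply/eqP => E; move: H; rewrite E => H.
    by have := ltn_trans Hij H; rewrite ltnn.
  have Hne := nth_neq Hu Hrs (ltn_trans Hij (ltn_trans Hjk Hk)) Hri.
  move: (B2 r Hr) => /andP [C1 C2].
  apply/negP => /andP [D1 D2].
  case: (ltngtP t.@[r] t.@[i]) => E.
  + by move: C1; rewrite D1 E.
  + by move: C2; rewrite E D2.
  + by move: Hne; rewrite E eqxx.
- move=> r Hr; have := B1 r Hr; apply: contra => /andP [_ ->] //.
- move=> r Hr; have := B2 r Hr => H.
  apply/andP; split; apply: contra H => /andP [D1 D2]; apply/andP; split => //.
  + exact: ltn_trans D2 Hil.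
  + exact: ltn_trans Hki D1.
Qed.

Lemma patmu_contains (t : seq nat) : uniq t -> (forall r, r < size t -> 0 < t.@[r]) ->
  (patmu t <-> contains_mesh mu2413.1 mu2413.2 t).
Proof.
move=> Hu Hpos; rewrite containsMuP; split.
- move=> [i [j [k [l [/andP [Hij Hjk] /andP [Hkl Hl] Hv HB]]]]].
  have Hks : k < size t by exact: ltn_trans Hkl Hl.
  move: (Hv) => /andP [/andP [Hki Hil] _].
  exists i, j, k, l; split => //; [by rewrite Hij Hjk|by rewrite Hkl Hl|].
  by apply/(MB_equiv Hu Hpos Hij Hjk Hks Hki Hil).
- move=> [i [j [k [l [/andP [Hij Hjk] /andP [Hkl Hl] Hv HB]]]]].
  have Hks : k < size t by exact: ltn_trans Hkl Hl.
  move: (Hv) => /andP [/andP [Hki Hil] _].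
  exists i, j, k, l; split => //; [by rewrite Hij Hjk|by rewrite Hkl Hl|].
  by apply/(MB_equiv Hu Hpos Hij Hjk Hks Hki Hil).
Qed.

Lemma pat1324_contains (t : seq nat) : pat1324 t <-> contains_cl [:: 1; 3; 2; 4] t.
Proof. by rewrite contains1324P. Qed.

Theorem mainTheorem9 (n : nat) (t : seq nat) :
  0 < n -> is_perm n t ->
  (west_s (SC_23_1 t) = iota 1 n <->
   (~~ contains_cl [:: 1; 3; 2; 4] t /\ ~~ contains_mesh mu2413.1 mu2413.2 t)).
Proof.
move=> _ Hp; rewrite /is_perm in Hp.
have Hu : uniq t by rewrite (perm_uniq Hp) iota_uniq.
have Hpos : forall r, r < size t -> 0 < t.@[r].
  move=> r Hr; have : t.@[r] \in iota 1 n by rewrite -(perm_mem Hp) mem_nth.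
  by rewrite mem_iota => /andP [].
have [Ha _ _ _ _] := scstate_inv Hu.
set w := (scstate t).2 ++ (scstate t).1.
have Hw : perm_eq w t by exact: Ha.
have Huw : uniq w by rewrite (perm_uniq Hw).
have [Hwa _ _] := wstate_inv Huw.
rewrite SC_eq // -/w W_eq //.
set s := (wstate w).2 ++ (wstate w).1.
have Hs : perm_eq s (iota 1 n) by apply: perm_trans Hwa (perm_trans Hw Hp).
have Hsort : s = iota 1 n <-> pairwise ltn s.
  split.
  - move=> ->; rewrite -(sorted_pairwise ltn_trans); exact: iota_ltn_sorted.
  - move=> H; apply: (irr_sorted_eq ltn_trans ltnn).
    + by rewrite (sorted_pairwise ltn_trans).
    + exact: iota_ltn_sorted.
    + exact: perm_mem Hs.
rewrite Hsort west_sorted // main_equiv // pat1324_contains patmu_contains //.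
split.
- move=> H; split; apply/negP => H'; apply: H; by [left|right].
- move=> [/negP H1 /negP H2] [H|H]; by [apply: H1|apply: H2].
Qed.
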